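(* Let $m\ge1$, $G(x)=-x^3$, and let $F(x)=|x^h|^2$. Let $(\widetilde\varrho_\varepsilon)_{0<\varepsilon\le1}$ be positive functions on $\Omega=\mathbb R^2\times\,]0,1[$ solving $\Pi(\widetilde\varrho_\varepsilon)=\varepsilon^{2(m-1)}F+\varepsilon^mG$ on $\Omega$. Then for every $l>0$ there exists a constant $C(l)>1$ such that for all $\varepsilon\in\,]0,1]$ one has $\widetilde\varrho_\varepsilon\le C(l)$ on $\overline{\mathbb B}_l$, where $\mathbb B_l:=\{x\in\Omega:|x^h|<l\}$. If instead $F\equiv0$ (and $\widetilde\varrho_\varepsilon$ solve $\Pi(\widetilde\varrho_\varepsilon)=\varepsilon^mG$), then there exists a constant $C>1$ such that $|\widetilde\varrho_\varepsilon(x)|\le C$ for all $\varepsilon\in\,]0,1]$ and all $x\in\Omega$.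
   Context: Points of $\Omega$ are $x=(x^h,x^3)$ with $x^h\in\mathbb R^2$. The pressure is $p(\varrho,\vartheta)=\vartheta^{5/2}P(\varrho/\vartheta^{3/2})+\frac a3\vartheta^4$ with $a>0$, where $P\in C^1([0,\infty))\cap C^2(]0,\infty[)$, $P(0)=0$, $P'(Z)>0$ for all $Z\ge0$, $0<\big(\frac53P(Z)-P'(Z)Z\big)/Z<c$ for all $Z>0$, and $\lim_{Z\to+\infty}P(Z)/Z^{5/3}=P_\infty>0$. Fix a constant $\overline\vartheta>0$ and set $\Pi(\varrho):=\int_1^\varrho\frac{\partial_\varrho p(z,\overline\vartheta)}{z}dz$ for $\varrho>0$. *)

(* Defs.v *)
From Stdlib Require Import Reals.
From Coquelicot Require Import Coquelicot.
Open Scope R_scope.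

Definition pressure (P : R -> R) (a rho theta : R) : R :=
  Rpower theta (5/2) * P (rho / Rpower theta (3/2)) + a / 3 * theta ^ 4.

Definition Pi (P : R -> R) (a thetabar rho : R) : R :=
  RInt (fun z => Derive (fun r => pressure P a r thetabar) z / z) 1 rho.

Definition P_hyps (P dP : R -> R) : Prop :=
  (* P in C^1([0,oo)) *)
  (forall Z, 0 < Z -> is_derive P Z (dP Z)) /\
  filterlim (fun h => (P h - P 0) / h) (at_right 0) (locally (dP 0)) /\
  (forall Z, 0 < Z -> continuous dP Z) /\
  filterlim dP (at_right 0) (locally (dP 0)) /\
  (* P in C^2(]0,oo[) *)
  (forall Z, 0 < Z -> ex_derive dP Z) /\
  (forall Z, 0 < Z -> continuous (Derive dP) Z) /\
  P 0 = 0 /\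
  (forall Z, 0 <= Z -> 0 < dP Z) /\
  (exists c, forall Z, 0 < Z ->
      0 < (5/3 * P Z - dP Z * Z) / Z < c) /\
  (exists Pinf, 0 < Pinf /\
      is_lim (fun Z => P Z / Rpower Z (5/3)) p_infty Pinf).

Definition in_Omega (x1 x2 x3 : R) : Prop := 0 < x3 < 1.

(* Main.v *)
Require Import Defs.
From Stdlib Require Import Reals Lra.
From Coquelicot Require Import Coquelicot.
Open Scope R_scope.

Definition hh (dP : R -> R) (th z : R) : R :=
  Rpower th (5/2) / Rpower th (3/2) * dP (z / Rpower th (3/2)) * / z.

Lemma Rpower_pos' x y : 0 < x -> 0 < Rpower x y.
Proof. intros; unfold Rpower; apply exp_pos. Qed.

Lemma D1 (P dP : R -> R) a th :
  0 < th -> (forall Z, 0 < Z -> is_derive P Z (dP Z)) -> forall z, 0 < z ->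
  Derive (fun r => pressure P a r th) z
   = Rpower th (5/2) / Rpower th (3/2) * dP (z / Rpower th (3/2)).
Proof.
  intros Hth HP z Hz.
  set (s := Rpower th (3/2)). set (k := Rpower th (5/2)).
  assert (Hs : 0 < s) by (apply Rpower_pos'; auto).
  apply is_derive_unique. unfold pressure. fold s k.
  assert (H1 : is_derive (fun r => r / s) z (/ s)).
  { auto_derive. lra. field. lra. }
  assert (H2 : is_derive (fun r => P (r / s)) z (/ s * dP (z / s))).
  { apply (is_derive_comp P (fun r => r / s) z (dP (z/s)) (/ s)).
    apply HP. apply Rdiv_lt_0_compat; auto. exact H1. }
  assert (H3 := is_derive_scal _ _ k _ H2).
  assert (H4 := is_derive_plus _ (fun _ => a / 3 * th ^ 4) _ _ _ H3 (is_derive_const (a/3*th^4) z)).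
  replace (k/s*dP(z/s)) with (plus (k*(/s*dP(z/s))) zero).
  eapply is_derive_ext; [|exact H4]. intros; simpl. reflexivity.
  rewrite plus_zero_r. change (k * (/ s * dP (z / s)) = k / s * dP (z / s)). unfold Rdiv. ring.
Qed.

Lemma h_cont (dP : R -> R) (th : R) : 0 < th -> (forall Z, 0 < Z -> continuous dP Z) ->
  forall z, 0 < z -> continuous (hh dP th) z.
Proof.
  intros Hth Hc z Hz. unfold hh.
  set (s := Rpower th (3/2)). set (k := Rpower th (5/2)).
  assert (Hs : 0 < s) by (apply Rpower_pos'; auto).
  apply (continuous_mult (fun y => k / s * dP (y / s)) (fun y => / y)).
  - apply (continuous_mult (fun _ => k / s) (fun y => dP (y / s))).
    apply continuous_const.
    apply (continuous_comp (fun y => y / s) dP).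
    + apply (continuous_mult (fun y => y) (fun _ => / s)). apply continuous_id. apply continuous_const.
    + apply Hc. apply Rdiv_lt_0_compat; auto.
  - apply continuous_Rinv. lra.
Qed.

Lemma h_int (dP : R -> R) (th a0 b0 : R) : 0 < th -> (forall Z, 0 < Z -> continuous dP Z) ->
  0 < a0 -> 0 < b0 -> ex_RInt (hh dP th) a0 b0.
Proof.
  intros. apply (@ex_RInt_continuous R_CompleteNormedModule). intros z Hz. apply h_cont; auto.
  destruct Hz as [Hz _]. apply Rlt_le_trans with (2 := Hz).
  unfold Rmin; destruct Rle_dec; auto.
Qed.

Lemma h_pos (dP : R -> R) (th z : R) : 0 < th -> (forall Z, 0 <= Z -> 0 < dP Z) -> 0 < z -> 0 < hh dP th z.
Proof.
  intros Hth Hd Hz. unfold hh.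
  assert (Hs : 0 < Rpower th (3/2)) by (apply Rpower_pos'; auto).
  assert (Hk : 0 < Rpower th (5/2)) by (apply Rpower_pos'; auto).
  apply Rmult_lt_0_compat. apply Rmult_lt_0_compat.
  apply Rdiv_lt_0_compat; auto. apply Hd. left; apply Rdiv_lt_0_compat; auto.
  apply Rinv_0_lt_compat; auto.
Qed.

Lemma Pi_eq (P dP : R -> R) (a th : R) : 0 < th -> (forall Z, 0 < Z -> is_derive P Z (dP Z)) ->
  forall rho, 0 < rho -> Pi P a th rho = RInt (hh dP th) 1 rho.
Proof.
  intros Hth HP rho Hr. unfold Pi. apply RInt_ext. intros x [Hx _].
  assert (0 < x).
  { apply Rle_lt_trans with (2 := Hx). unfold Rmin; destruct Rle_dec; lra. }
  rewrite (D1 P dP a th Hth HP x H). unfold hh. unfold Rdiv at 3. reflexivity.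
Qed.

Lemma h_mono (dP : R -> R) (th C rho : R) : 0 < th -> (forall Z, 0 < Z -> continuous dP Z) ->
  (forall Z, 0 <= Z -> 0 < dP Z) -> 0 < C <= rho ->
  RInt (hh dP th) 1 C <= RInt (hh dP th) 1 rho.
Proof.
  intros Hth Hc Hd [HC Hr].
  rewrite <- (RInt_Chasles (hh dP th) 1 C rho).
  2,3: apply h_int; auto; lra.
  change (plus ?x ?y) with (x + y).
  assert (0 <= RInt (hh dP th) C rho).
  { apply RInt_ge_0; auto. apply h_int; auto; lra.
    intros x Hx. left. apply h_pos; auto. lra. }
  lra.
Qed.

Lemma h_lower (P dP : R -> R) (th C : R) : 0 < th -> (forall Z, 0 < Z -> is_derive P Z (dP Z)) ->
  (forall Z, 0 < Z -> continuous dP Z) ->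
  (forall Z, 0 <= Z -> 0 < dP Z) -> 1 <= C ->
  Rpower th (5/2) / C * (P (C / Rpower th (3/2)) - P (1 / Rpower th (3/2)))
  <= RInt (hh dP th) 1 C.
Proof.
  intros Hth HP Hc Hd HC.
  set (s := Rpower th (3/2)). set (k := Rpower th (5/2)).
  assert (Hs : 0 < s) by (apply Rpower_pos'; auto).
  assert (Hk : 0 < k) by (apply Rpower_pos'; auto).
  set (q := fun z => k / s * dP (z / s) * / C).
  assert (Hq : is_RInt q 1 C (minus (k / C * P (C / s)) (k / C * P (1 / s)))).
  { apply (is_RInt_derive (fun z => k / C * P (z / s)) q).
    - intros x Hx. assert (0 < x).
      { destruct Hx as [Hx _]. apply Rlt_le_trans with (2 := Hx).
        unfold Rmin; destruct Rle_dec; lra. }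
      assert (H1 : is_derive (fun r => r / s) x (/ s)).
      { auto_derive. lra. field. lra. }
      assert (H2 := is_derive_comp P (fun r => r / s) x (dP (x/s)) (/ s)
                   (HP _ (Rdiv_lt_0_compat _ _ H Hs)) H1).
      assert (H3 := is_derive_scal _ _ (k / C) _ H2).
      replace (q x) with (k / C * scal (/ s) (dP (x / s))). exact H3.
      unfold q. change (scal (/ s) (dP (x / s))) with (/ s * dP (x / s)).
      field. lra.
    - intros x Hx. assert (0 < x).
      { destruct Hx as [Hx _]. apply Rlt_le_trans with (2 := Hx).
        unfold Rmin; destruct Rle_dec; lra. }
      unfold q.
      apply (continuous_mult (fun y => k / s * dP (y / s)) (fun _ => / C)).
      2: apply continuous_const.
      apply (continuous_mult (fun _ => k / s) (fun y => dP (y / s))).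
      apply continuous_const.
      apply (continuous_comp (fun y => y / s) dP).
      + apply (continuous_mult (fun y => y) (fun _ => / s)). apply continuous_id. apply continuous_const.
      + apply Hc. apply Rdiv_lt_0_compat; auto. }
  assert (E : RInt q 1 C = k / C * P (C / s) - k / C * P (1 / s))
         by exact (is_RInt_unique _ _ _ _ Hq).
  apply Rle_trans with (RInt q 1 C). right. rewrite E. ring.
  apply RInt_le; auto.
  exists (minus (k / C * P (C / s)) (k / C * P (1 / s))); exact Hq.
  apply h_int; auto; lra.
  intros x Hx. unfold q, hh. fold s k.
  apply Rmult_le_compat_l.
  left. apply Rmult_lt_0_compat. apply Rdiv_lt_0_compat; auto.
  apply Hd. left. apply Rdiv_lt_0_compat; lra.
  apply Rinv_le_contravar; lra.
Qed.

Lemma big (P : R -> R) (k s B : R) : 0 < k -> 0 < s ->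
  (exists Pinf, 0 < Pinf /\ is_lim (fun Z => P Z / Rpower Z (5/3)) p_infty Pinf) ->
  exists C, 1 < C /\ B < k / C * (P (C / s) - P (1 / s)).
Proof.
  intros Hk Hs [Pinf [HPi Hl]].
  apply is_lim_spec in Hl.
  destruct (Hl (mkposreal (Pinf/2) ltac:(lra))) as [M HM]. simpl in HM.
  set (P1 := P (1 / s)).
  set (T := 2 * (Rabs B * s / k + Rabs P1 + 1) / Pinf).
  set (M' := Rmax 1 T).
  set (Z := Rmax (Rmax (Rmax (M + 1) (/ s + 1)) 2) (Rpower M' (3/2))).
  assert (HZ1 : M + 1 <= Z) by (unfold Z; repeat (eapply Rle_trans; [|apply Rmax_l]); lra).
  assert (HZ2 : / s + 1 <= Z) by (unfold Z; eapply Rle_trans; [|apply Rmax_l];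
     eapply Rle_trans; [|apply Rmax_l]; apply Rmax_r).
  assert (HZ3 : 2 <= Z) by (unfold Z; eapply Rle_trans; [|apply Rmax_l]; apply Rmax_r).
  assert (HZ4 : Rpower M' (3/2) <= Z) by (unfold Z; apply Rmax_r).
  assert (HM'1 : 1 <= M') by apply Rmax_l.
  assert (HM'T : T <= M') by apply Rmax_r.
  assert (HR23 : M' <= Rpower Z (2/3)).
  { rewrite <- (Rpower_1 M') at 1 by lra.
    replace 1 with (3/2 * (2/3)) by field.
    rewrite <- Rpower_mult. apply Rle_Rpower_l. lra. split; auto.
    apply Rpower_pos'; lra. }
  assert (HR53 : Rpower Z (5/3) = Z * Rpower Z (2/3)).
  { replace (5/3) with (1 + 2/3) by field. rewrite Rpower_plus, Rpower_1; lra. }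
  assert (HPZ : Pinf / 2 * Rpower Z (5/3) < P Z).
  { assert (H := HM Z ltac:(lra)).
    assert (Hp : 0 < Rpower Z (5/3)) by (apply Rpower_pos'; lra).
    apply Rabs_def2 in H. destruct H as [_ H].
    assert (Pinf / 2 < P Z / Rpower Z (5/3)) by lra.
    apply Rmult_lt_reg_r with (/ Rpower Z (5/3)). apply Rinv_0_lt_compat; auto.
    rewrite Rmult_assoc, Rinv_r by lra. rewrite Rmult_1_r. exact H0. }
  assert (HT : Pinf / 2 * T = Rabs B * s / k + Rabs P1 + 1) by (unfold T; field; lra).
  assert (HPZ2 : Z * (Rabs B * s / k + Rabs P1 + 1) <= P Z).
  { left. eapply Rle_lt_trans; [|exact HPZ]. rewrite HR53, <- HT.
    assert (T <= Rpower Z (2/3)) by lra.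
    assert (0 <= T).
    { unfold T. apply Rmult_le_pos. 2: left; apply Rinv_0_lt_compat; lra.
      assert (0 <= Rabs B * s / k).
      { apply Rmult_le_pos. apply Rmult_le_pos. apply Rabs_pos. lra. left; apply Rinv_0_lt_compat; lra. }
      pose proof (Rabs_pos P1). lra. }
    replace (Z * (Pinf / 2 * T)) with ((Pinf/2 * Z) * T) by ring.
    replace (Pinf / 2 * (Z * Rpower Z (2 / 3))) with ((Pinf/2 * Z) * Rpower Z (2/3)) by ring.
    apply Rmult_le_compat_l. apply Rmult_le_pos; lra. auto. }
  assert (HP1 : P1 <= Z * Rabs P1).
  { pose proof (Rle_abs P1). pose proof (Rabs_pos P1).
    apply Rle_trans with (Rabs P1); auto.
    replace (Rabs P1) with (1 * Rabs P1) at 1 by ring.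
    apply Rmult_le_compat_r; lra. }
  exists (s * Z). split.
  { assert (1 < s * (/ s + 1)).
    { rewrite Rmult_plus_distr_l, Rinv_r by lra. lra. }
    apply Rlt_le_trans with (1 := H). apply Rmult_le_compat_l; lra. }
  replace (s * Z / s) with Z by (field; lra). fold P1.
  assert (Hd : Z * (Rabs B * s / k + 1) <= P Z - P1) by lra.
  apply Rlt_le_trans with (k / (s * Z) * (Z * (Rabs B * s / k + 1))).
  { replace (k / (s * Z) * (Z * (Rabs B * s / k + 1))) with (Rabs B + k / s) by (field; lra).
    pose proof (Rle_abs B). assert (0 < k / s) by (apply Rdiv_lt_0_compat; auto). lra. }
  apply Rmult_le_compat_l; auto. left. apply Rdiv_lt_0_compat; auto. apply Rmult_lt_0_compat; lra.
Qed.

Lemma key (P dP : R -> R) (a th : R) : P_hyps P dP -> 0 < th ->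
  forall B, exists C, 1 < C /\ forall rho, 0 < rho -> Pi P a th rho <= B -> rho <= C.
Proof.
  intros [HP [_ [Hc [_ [_ [_ [_ [Hd [_ Hinf]]]]]]]]] Hth B.
  assert (Hs : 0 < Rpower th (3/2)) by (apply Rpower_pos'; auto).
  assert (Hk : 0 < Rpower th (5/2)) by (apply Rpower_pos'; auto).
  destruct (big P _ _ B Hk Hs Hinf) as [C [HC HB]].
  exists C; split; auto. intros rho Hr HPi.
  destruct (Rle_dec rho C) as [|Hn]; auto. exfalso.
  rewrite (Pi_eq P dP a th Hth HP rho Hr) in HPi.
  assert (H1 := h_mono dP th C rho Hth Hc Hd ltac:(lra)).
  assert (H2 := h_lower P dP th C Hth HP Hc Hd ltac:(lra)).
  lra.
Qed.

Lemma Rpower_le1 e x : 0 <= e -> 0 < x <= 1 -> Rpower x e <= 1.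
Proof.
  intros He [Hx1 Hx2]. unfold Rpower. rewrite <- exp_0.
  assert (ln x <= 0). { rewrite <- ln_1. destruct Hx2. left; apply ln_increasing; lra. subst; lra. }
  destruct (Rle_lt_or_eq_dec _ _ (Rmult_le_compat_l e _ _ He H)) as [Hl|Hl];
  rewrite Rmult_0_r in Hl.
  left; apply exp_increasing; auto. rewrite Hl; lra.
Qed.

Theorem lemma2p3 (P dP : R -> R) (a thetabar m : R) :
  P_hyps P dP -> 0 < a -> 0 < thetabar -> 1 <= m ->
  (* case F(x) = |x^h|^2, G(x) = -x^3 *)
  (forall rho : R -> R -> R -> R -> R,
     (forall eps x1 x2 x3, 0 < eps <= 1 -> in_Omega x1 x2 x3 ->
        0 < rho eps x1 x2 x3 /\
        Pi P a thetabar (rho eps x1 x2 x3)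
          = Rpower eps (2 * (m - 1)) * (x1 ^ 2 + x2 ^ 2) + Rpower eps m * (- x3)) ->
     forall l, 0 < l -> exists C, 1 < C /\
       forall eps x1 x2 x3, 0 < eps <= 1 -> in_Omega x1 x2 x3 ->
         sqrt (x1 ^ 2 + x2 ^ 2) <= l -> rho eps x1 x2 x3 <= C) /\
  (* case F = 0 *)
  (forall rho : R -> R -> R -> R -> R,
     (forall eps x1 x2 x3, 0 < eps <= 1 -> in_Omega x1 x2 x3 ->
        0 < rho eps x1 x2 x3 /\
        Pi P a thetabar (rho eps x1 x2 x3) = Rpower eps m * (- x3)) ->
     exists C, 1 < C /\
       forall eps x1 x2 x3, 0 < eps <= 1 -> in_Omega x1 x2 x3 ->
         Rabs (rho eps x1 x2 x3) <= C).
Proof.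
  intros Hh Ha Hth Hm. split.
  - intros rho Hrho l Hl.
    destruct (key P dP a thetabar Hh Hth (l ^ 2)) as [C [HC HK]].
    exists C; split; auto. intros eps x1 x2 x3 He Hx Hsq.
    destruct (Hrho eps x1 x2 x3 He Hx) as [Hp HPi].
    apply HK; auto. rewrite HPi.
    assert (H1 := Rpower_le1 (2 * (m - 1)) eps ltac:(lra) He).
    assert (H2 : 0 < Rpower eps m) by (apply Rpower_pos'; lra).
    assert (H3 : 0 <= Rpower eps (2 * (m - 1))) by (left; apply Rpower_pos'; lra).
    unfold in_Omega in Hx.
    assert (Hq : 0 <= x1 ^ 2 + x2 ^ 2) by nra.
    assert (Hq2 : x1 ^ 2 + x2 ^ 2 <= l ^ 2).
    { rewrite <- (sqrt_sqrt (x1 ^ 2 + x2 ^ 2)) by auto.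
      pose proof (sqrt_pos (x1 ^ 2 + x2 ^ 2)). nra. }
    assert (Rpower eps (2 * (m - 1)) * (x1 ^ 2 + x2 ^ 2) <= 1 * (x1 ^ 2 + x2 ^ 2))
      by (apply Rmult_le_compat_r; auto).
    nra.
  - intros rho Hrho.
    destruct (key P dP a thetabar Hh Hth 0) as [C [HC HK]].
    exists C; split; auto. intros eps x1 x2 x3 He Hx.
    destruct (Hrho eps x1 x2 x3 He Hx) as [Hp HPi].
    rewrite Rabs_pos_eq by lra.
    apply HK; auto. rewrite HPi.
    assert (H2 : 0 < Rpower eps m) by (apply Rpower_pos'; lra).
    unfold in_Omega in Hx. nra.
Qed.
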